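(* Let $x$ be a real number with $x\notin[-1,1]$. For $n\in\mathbb N$ and integers $d\geq 1$ let $S_{n,d}(x)=\sum_{k=0}^nU_{d-1}(T_{(d+1)^k}(x))\prod_{j=0}^k\frac{1}{U_d(T_{(d+1)^j}(x))}$. Then the limit $\lim_{n+d\rightarrow\infty}S_{n,d}(x)$ exists (i.e. there is a real $L$ such that for every $\varepsilon>0$ there exists $N$ with $|S_{n,d}(x)-L|<\varepsilon$ whenever $n\in\mathbb N$, $d\ge1$, $n+d\geq N$) and it equals $\mathrm{sign}(x)\left(|x|-\sqrt{x^2-1}\right)$, the root closest to zero of $X^2-2xX+1$.
   Context: $T_n$ and $U_n$ denote the Chebyshev polynomials of the first and second kind, defined by $T_0=1$, $T_1=x$, $T_{n+1}=2xT_n-T_{n-1}$ and $U_0=1$, $U_1=2x$, $U_{n+1}=2xU_n-U_{n-1}$ for $n\geq1$. $\mathrm{sign}(x)\in\{\pm1\}$ is the sign of $x$. *)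

(* Defs.v *)
From Stdlib Require Import Reals.
Open Scope R_scope.

Fixpoint cheb_pair (p0 p1 : R -> R) (n : nat) (x : R) : R * R :=
  match n with
  | O => (p0 x, p1 x)
  | S m => let (a, b) := cheb_pair p0 p1 m x in (b, 2 * x * b - a)
  end.

Definition chebT (n : nat) (x : R) : R := fst (cheb_pair (fun _ => 1) (fun y => y) n x).
Definition chebU (n : nat) (x : R) : R := fst (cheb_pair (fun _ => 1) (fun y => 2 * y) n x).

Definition sgn (x : R) : R := if Rlt_dec x 0 then -1 else 1.

Fixpoint prod_R (f : nat -> R) (k : nat) : R :=
  match k with
  | O => f O
  | S m => prod_R f m * f (S m)
  end.

Definition S_nd (n d : nat) (x : R) : R :=
  sum_f_R0 (fun k =>
     chebU (d - 1) (chebT ((d + 1) ^ k) x) *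
     prod_R (fun j => / chebU d (chebT ((d + 1) ^ j) x)) k) n.

(* Main.v *)
Require Import Defs.
From Stdlib Require Import Reals Lra Lia Psatz.
Open Scope R_scope.

Lemma cheb_pair_form (p0 p1 : R -> R) (y : R) (F : nat -> R) :
  F 0%nat = p0 y -> F 1%nat = p1 y ->
  (forall n, F (S (S n)) = 2 * y * F (S n) - F n) ->
  forall n, cheb_pair p0 p1 n y = (F n, F (S n)).
Proof.
  intros H0 H1 Hr n; induction n as [|n IH]; simpl.
  - rewrite H0, H1; reflexivity.
  - rewrite IH. rewrite Hr. reflexivity.
Qed.

Lemma chebT_form (s : R) (n : nat) : s <> 0 ->
  chebT n ((s + / s) / 2) = (s ^ n + / s ^ n) / 2.
Proof.
  intros Hs. unfold chebT. rewrite <- pow_inv.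
  rewrite (cheb_pair_form _ _ _ (fun n => (s ^ n + (/ s) ^ n) / 2)); simpl.
  - reflexivity.
  - field; auto.
  - field; auto.
  - intros m. simpl. field. auto.
Qed.

Lemma chebU_form (s : R) (n : nat) : s <> 0 -> s * s <> 1 ->
  chebU n ((s + / s) / 2) = (s ^ S n - / s ^ S n) / (s - / s).
Proof.
  intros Hs Hs1. assert (E : s - / s <> 0).
  { intro H. apply Hs1. assert (s * (s - / s) = 0) by (rewrite H; ring).
    replace (s * (s - / s)) with (s * s - 1) in H0 by (field; auto). lra. }
  unfold chebU. rewrite <- pow_inv.
  rewrite (cheb_pair_form _ _ _ (fun n => (s ^ S n - (/ s) ^ S n) / (s - / s))).
  - reflexivity.
  - simpl. field. repeat split; auto; intro; apply Hs1; lra.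
  - simpl. field. repeat split; auto; intro; apply Hs1; lra.
  - intros m. simpl. field. repeat split; auto; intro; apply Hs1; lra.
Qed.

Lemma pow_small (t:R) (m:nat): Rabs t < 1 -> (1 <= m)%nat -> Rabs (t^m) <= Rabs t.
Proof.
  intros Ht Hm. induction Hm.
  - simpl; rewrite Rmult_1_r; lra.
  - simpl. rewrite Rabs_mult. pose proof (Rabs_pos t). pose proof (Rabs_pos (t^m)). nra.
Qed.

Lemma sq_lt1 (s:R) : Rabs s < 1 -> s * s < 1.
Proof.
  intros H. pose proof (Rabs_pos s).
  assert (Rabs s * Rabs s = s * s) by (rewrite <- Rabs_mult; apply Rabs_pos_eq; nra). nra.
Qed.

Lemma E_nz (s:R) : s <> 0 -> s * s < 1 -> s - / s <> 0.
Proof.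
  intros Hs H1 HH. assert (E1 : s * (s - / s) = 0) by (rewrite HH; ring).
  replace (s * (s - / s)) with (s * s - 1) in E1 by (field; auto). lra.
Qed.

Section Main.
Variables (t : R) (d : nat).
Hypothesis (Ht0 : t <> 0) (Ht1 : Rabs t < 1) (Hd : (1 <= d)%nat).
Let x := (t + / t) / 2.
Let a (j : nat) := t ^ ((d+1)^j).

Lemma a_S j : a (S j) = a j ^ S d.
Proof.
  unfold a. rewrite Nat.pow_succ_r by lia. rewrite Nat.mul_comm, pow_mult.
  f_equal. lia.
Qed.

Lemma a_props j : a j <> 0 /\ Rabs (a j) < 1 /\ a j * a j < 1.
Proof.
  unfold a. assert (H1 : (1 <= (d+1)^j)%nat).
  { pose proof (Nat.pow_nonzero (d+1) j). lia. }
  pose proof (pow_small t _ Ht1 H1).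
  split; [apply pow_nonzero; auto|]. split; [lra|]. apply sq_lt1; lra.
Qed.

Lemma a0 : a 0 = t.
Proof. unfold a. simpl. ring. Qed.

Lemma yform j : chebT ((d+1)^j) x = (a j + / a j) / 2.
Proof. unfold x, a. rewrite chebT_form by auto. reflexivity. Qed.

Lemma Ud j : / chebU d (chebT ((d+1)^j) x) = (a j - / a j) / (a (S j) - / a (S j)).
Proof.
  destruct (a_props j) as [H1 [H2 H3]].
  destruct (a_props (S j)) as [K1 [K2 K3]].
  rewrite yform, chebU_form by (auto; lra).
  rewrite <- a_S.
  pose proof (E_nz _ H1 H3). pose proof (E_nz _ K1 K3).
  field; repeat split; try assumption; intro; lra.
Qed.

Lemma prodU k : prod_R (fun j => / chebU d (chebT ((d+1)^j) x)) k
   = (t - / t) / (a (S k) - / a (S k)).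
Proof.
  induction k as [|k IH]; cbn [prod_R].
  - rewrite Ud, a0. reflexivity.
  - rewrite IH, Ud.
    destruct (a_props (S k)) as [H1 [H2 H3]].
    destruct (a_props (S (S k))) as [K1 [K2 K3]].
    pose proof (E_nz _ H1 H3). pose proof (E_nz _ K1 K3).
    field; repeat split; try assumption; intro; nra.
Qed.

Lemma alg_id (A c Et : R) : A <> 0 -> c <> 0 -> A * A < 1 -> (A * c) * (A * c) < 1 ->
  (c - / c) / (A - / A) * (Et / (A * c - / (A * c))) = Et * (/ (1 - (A*c)^2) - / (1 - A^2)).
Proof.
  intros. field; repeat split; try assumption; intro; nra.
Qed.

Lemma term k : chebU (d-1) (chebT ((d+1)^k) x) * prod_R (fun j => / chebU d (chebT ((d+1)^j) x)) k
  = (t - / t) * (/ (1 - a (S k) ^ 2) - / (1 - a k ^ 2)).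
Proof.
  rewrite prodU, yform.
  destruct (a_props k) as [H1 [H2 H3]].
  destruct (a_props (S k)) as [K1 [K2 K3]].
  rewrite chebU_form by (auto; lra).
  replace (S (d-1)) with d by lia.
  rewrite a_S in *. change (a k ^ S d) with (a k * a k ^ d) in *.
  apply alg_id; auto. apply pow_nonzero; auto.
Qed.

Lemma sum_form n : S_nd n d x = (t - / t) * (/ (1 - a (S n) ^ 2) - / (1 - t ^ 2)).
Proof.
  unfold S_nd. induction n as [|n IH]; cbn [sum_f_R0].
  - rewrite term, a0. reflexivity.
  - rewrite IH, term. ring.
Qed.
End Main.

Lemma nat_bound n d : (1 <= d)%nat -> (n + d <= (d+1)^(S n))%nat.
Proof.
  intros Hd. induction n as [|n IH].
  - simpl. lia.
  - rewrite Nat.pow_succ_r'. nia.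
Qed.

Lemma t_exists (x : R) : ~ (-1 <= x <= 1) ->
  exists t, t <> 0 /\ Rabs t < 1 /\ x = (t + / t) / 2 /\ t = sgn x * (Rabs x - sqrt (x ^ 2 - 1)).
Proof.
  intros hx.
  assert (Hr2 : sqrt (x^2-1) * sqrt (x^2-1) = x^2 - 1).
  { apply sqrt_sqrt. destruct (Rlt_or_le x (-1)); [nra|].
    destruct (Rle_or_lt x 1); [exfalso; apply hx; lra| nra]. }
  pose proof (sqrt_pos (x^2-1)) as Hr0.
  set (r := sqrt (x^2-1)) in *.
  exists (sgn x * (Rabs x - r)).
  unfold sgn. destruct (Rlt_dec x 0).
  - rewrite Rabs_left by lra.
    assert (x < -1) by (destruct (Rlt_or_le x (-1)); [lra| exfalso; apply hx; lra]).
    assert (r < -x) by nra.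
    assert (HT : (-1) * (- x - r) * (x - r) = 1) by nra.
    assert (Hne : -1 * (- x - r) <> 0) by lra.
    repeat split; auto.
    + rewrite Rabs_left by lra. nra.
    + assert (Hi : / (-1 * (- x - r)) = x - r).
      { apply (Rmult_eq_reg_l (-1 * (- x - r))); [|exact Hne]. rewrite Rinv_r by exact Hne. lra. }
      rewrite Hi. lra.
  - rewrite Rabs_right by lra.
    assert (1 < x) by (destruct (Rle_or_lt x 1); [exfalso; apply hx; lra| lra]).
    assert (r < x) by nra.
    assert (HT : 1 * (x - r) * (x + r) = 1) by nra.
    assert (Hne : 1 * (x - r) <> 0) by lra.
    repeat split; auto.
    + rewrite Rabs_right by lra. nra.
    + assert (Hi : / (1 * (x - r)) = x + r).
      { apply (Rmult_eq_reg_l (1 * (x - r))); [|exact Hne]. rewrite Rinv_r by exact Hne. lra. }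
      rewrite Hi. lra.
Qed.

Theorem corollary1p2 (x : R) (hx : ~ (-1 <= x <= 1)) :
  exists L : R,
    (forall eps : R, eps > 0 ->
       exists N : nat, forall n d : nat, (1 <= d)%nat -> (N <= n + d)%nat ->
         Rabs (S_nd n d x - L) < eps)
    /\ L = sgn x * (Rabs x - sqrt (x ^ 2 - 1)).
Proof.
  destruct (t_exists x hx) as [t [Ht0 [Ht1 [Hx Ht]]]].
  exists t. split; [|exact Ht].
  intros eps Heps.
  assert (Hta : 0 < Rabs t) by (apply Rabs_pos_lt; auto).
  destruct (pow_lt_1_zero t Ht1 (eps * Rabs t)) as [N HN]; [nra|].
  exists N. intros n d Hd HNd.
  rewrite Hx, (sum_form t d Ht0 Ht1 Hd n).
  set (M := ((d+1)^(S n))%nat).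
  pose proof (nat_bound n d Hd) as HM. fold M in HM.
  assert (Hu : Rabs (t ^ M) < eps * Rabs t) by (apply HN; lia).
  assert (Hut : Rabs (t ^ M) <= Rabs t) by (apply pow_small; auto; lia).
  set (u := t ^ M) in *.
  assert (Hu2 : u * u < 1) by (apply sq_lt1; lra).
  assert (Ht2 : t * t < 1) by (apply sq_lt1; lra).
  set (w := (t - / t) * (/ (1 - u ^ 2) - / (1 - t ^ 2)) - t).
  assert (Hw : w * t * (1 - u^2) = u^2 * (t^2 - 1)).
  { unfold w. field. repeat split; auto; intro; nra. }
  assert (Hwa : Rabs w * Rabs t * (1 - u^2) = u^2 * (1 - t^2)).
  { rewrite <- (Rabs_pos_eq (1 - u^2)) by nra.
    rewrite <- (Rabs_pos_eq (u^2 * (1 - t^2))) by nra.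
    rewrite <- !Rabs_mult, Hw.
    replace (u^2 * (1 - t^2)) with (- (u^2 * (t^2 - 1))) by ring.
    rewrite Rabs_Ropp. reflexivity. }
  rewrite <- (pow2_abs u), <- (pow2_abs t) in Hwa.
  pose proof (Rabs_pos w). pose proof (Rabs_pos u).
  assert (HU1 : Rabs u * Rabs u < 1) by nra.
  set (U := Rabs u) in *. set (T := Rabs t) in *. set (W := Rabs w) in *.
  assert (Hc : U^2 * (1 - T^2) <= U^2 * (1 - U^2)).
  { apply Rmult_le_compat_l; [nra|]. nra. }
  assert (Hd2 : (W * T - U^2) * (1 - U^2) <= 0) by nra.
  assert (W * T <= U * U) by nra.
  assert (W <= U) by nra.
  nra.
Qed.
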